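(* Suppose that $\phi\in\mathbb{Q}(x)$ has degree $2$, has a $2$-periodic critical point, and that $\operatorname{Aut}(\phi)$ is nontrivial. Then $\phi$ is linearly conjugate over $\mathbb{Q}$ to a map of the form $\psi_v=\dfrac{2x-1}{vx^2-1}$ with $v\in\mathbb{Q}\setminus\{0,4\}$.
   Context: A point $P\in\mathbb{P}^1(\overline{\mathbb{Q}})$ is $2$-periodic if $\phi^2(P)=P\neq\phi(P)$; a critical point is a point where $\phi:\mathbb{P}^1\to\mathbb{P}^1$ ramifies. $\operatorname{Aut}(\phi)$ is the group of degree-one $\sigma\in\overline{\mathbb{Q}}(x)$ with $\sigma^{-1}\circ\phi\circ\sigma=\phi$. Linear conjugacy over $\mathbb{Q}$: $\psi=\sigma^{-1}\circ\phi\circ\sigma$ for some degree-one $\sigma\in\mathbb{Q}(x)$. *)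

(* Defs.v *)
(* Qbar is modelled by algC (the algebraic numbers). *)
From mathcomp Require Import all_boot all_order all_algebra all_field.
Set Implicit Arguments. Unset Strict Implicit. Unset Printing Implicit Defensive.
Import Order.TTheory GRing.Theory Num.Theory.
Local Open Scope ring_scope.

(* Binary quadratic form a X^2 + b X Y + c Y^2, coefficients (a,b,c). *)
Definition form2 (R : Type) := (R * R * R)%type.

(* Points of P^1(Qbar) are nonzero pairs (X,Y) up to scaling. *)
Definition pt := (algC * algC)%type.
Definition nzpt (p : pt) : bool := p != (0, 0).
Definition peq (p q : pt) : bool := p.1 * q.2 == p.2 * q.1.

Definition feval (f : form2 algC) (p : pt) : algC :=
  let: (a, b, c) := f in a * p.1 ^+ 2 + b * p.1 * p.2 + c * p.2 ^+ 2.

Definition fratr (f : form2 rat) : form2 algC :=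
  let: (a, b, c) := f in (ratr a, ratr b, ratr c).

(* A map [F : G] given by a pair of binary quadratic forms. *)
Definition hmap2 := (form2 algC * form2 algC)%type.
Definition hmapQ (F G : form2 rat) : hmap2 := (fratr F, fratr G).
Definition app2 (phi : hmap2) (p : pt) : pt := (feval phi.1 p, feval phi.2 p).

(* F and G have no common zero on P^1(Qbar): phi = F/G has degree exactly 2. *)
Definition deg2 (phi : hmap2) : Prop := forall p, nzpt p -> nzpt (app2 phi p).

(* Degree-one maps (Moebius transformations) x |-> (a x + b)/(c x + d). *)
Definition mob (R : Type) := (R * R * R * R)%type.
Definition mob_ok (s : mob algC) : bool :=
  let: (a, b, c, d) := s in a * d - b * c != 0.
Definition appM (s : mob algC) (p : pt) : pt :=
  let: (a, b, c, d) := s in (a * p.1 + b * p.2, c * p.1 + d * p.2).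
Definition mratr (s : mob rat) : mob algC :=
  let: (a, b, c, d) := s in (ratr a, ratr b, ratr c, ratr d).

Definition periodic2 (phi : hmap2) (P : pt) : Prop :=
  nzpt P /\ peq (app2 phi (app2 phi P)) P /\ ~~ peq (app2 phi P) P.

(* P is critical: phi ramifies at P, i.e. P occurs with multiplicity >= 2 in the
   fibre phi^{-1}(phi(P)); the fibre is cut out by the quadratic form
   H(Q) = F(Q) G(P) - G(Q) F(P), so H must be a multiple of (y0 X - x0 Y)^2. *)
Definition critical (phi : hmap2) (P : pt) : Prop :=
  nzpt P /\ exists c : algC, forall Q : pt,
    feval phi.1 Q * feval phi.2 P - feval phi.2 Q * feval phi.1 P
    = c * (P.2 * Q.1 - P.1 * Q.2) ^+ 2.

(* Aut(phi) nontrivial: some degree-one sigma over Qbar, not the identity,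
   with sigma^{-1} o phi o sigma = phi (equivalently phi o sigma = sigma o phi). *)
Definition nontrivial_aut (phi : hmap2) : Prop :=
  exists s : mob algC, mob_ok s /\
    (exists P, nzpt P /\ ~~ peq (appM s P) P) /\
    (forall P, nzpt P -> peq (appM s (app2 phi P)) (app2 phi (appM s P))).

(* psi_v = (2x - 1)/(v x^2 - 1), homogenised: [2XY - Y^2 : vX^2 - Y^2]. *)
Definition psiF : form2 rat := (0, 2, -1).
Definition psiG (v : rat) : form2 rat := (v, 0, -1).

(* psi = sigma^{-1} o phi o sigma with sigma degree-one over Q
   (equivalently phi o sigma = sigma o psi as maps on P^1(Qbar)). *)
Definition lin_conj_Q (phi psi : hmap2) : Prop :=
  exists s : mob rat, mob_ok (mratr s) /\
    forall P, nzpt P -> peq (app2 phi (appM (mratr s) P)) (appM (mratr s) (app2 psi P)).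

(* Main.v *)
Require Import Defs.
From mathcomp Require Import all_boot all_order all_algebra all_field.
From mathcomp Require Import ring.
Import GRing.Theory Num.Theory.
Local Open Scope ring_scope.
Set Implicit Arguments. Unset Strict Implicit. Unset Printing Implicit Defensive.

Definition pdet (p q : pt) : algC := p.1 * q.2 - p.2 * q.1.
Definition sv (k : algC) (p : pt) : pt := (k * p.1, k * p.2).

Lemma peqE p q : peq p q = (pdet p q == 0).
Proof. by rewrite /peq /pdet subr_eq0. Qed.

Lemma nzptE p : nzpt p = (p.1 != 0) || (p.2 != 0).
Proof. by case: p => x y; rewrite /nzpt xpair_eqE negb_and. Qed.

Lemma pdet_trans X Y Z : nzpt Y -> pdet X Y = 0 -> pdet Y Z = 0 -> pdet X Z = 0.
Proof.
move=> nY h1 h2.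
have e1 : Y.1 * pdet X Z = X.1 * pdet Y Z + Z.1 * pdet X Y by rewrite /pdet; ring.
have e2 : Y.2 * pdet X Z = X.2 * pdet Y Z + Z.2 * pdet X Y by rewrite /pdet; ring.
rewrite h1 h2 !mulr0 addr0 in e1 e2.
move: nY; rewrite nzptE => /orP [] hY.
- by move/eqP: e1; rewrite mulf_eq0 (negbTE hY) /= => /eqP.
- by move/eqP: e2; rewrite mulf_eq0 (negbTE hY) /= => /eqP.
Qed.

Lemma pdet_sym X Y : pdet X Y = 0 -> pdet Y X = 0.
Proof.
move=> h; have -> : pdet Y X = - pdet X Y by rewrite /pdet; ring.
by rewrite h oppr0.
Qed.

Lemma pdet_ex X Y : nzpt Y -> pdet X Y = 0 -> exists k, X = sv k Y.
Proof.
case: X Y => x1 x2 [y1 y2]; rewrite nzptE /pdet /sv /= => /orP [] hy /eqP; rewrite subr_eq0 => /eqP h.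
- exists (x1 / y1); congr pair; first by field.
  by rewrite mulrAC h mulfK.
- exists (x2 / y2); congr pair; last by field.
  by rewrite mulrAC -h mulfK.
Qed.

Lemma pdet_nz X Y : nzpt X -> nzpt Y -> pdet X Y != 0 -> True. Proof. by []. Qed.

Lemma pdet_self X : pdet X X = 0.
Proof. by rewrite /pdet mulrC subrr. Qed.

Lemma pdet_svl k X Y : pdet (sv k X) Y = k * pdet X Y.
Proof. by rewrite /pdet /sv /=; ring. Qed.
Lemma pdet_svr k X Y : pdet X (sv k Y) = k * pdet X Y.
Proof. by rewrite /pdet /sv /=; ring. Qed.

Definition mdet (m : mob algC) : algC := let: (a,b,c,d) := m in a*d - b*c.
Definition adjm (m : mob algC) : mob algC := let: (a,b,c,d) := m in (d, -b, -c, a).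

Lemma mob_okE m : mob_ok m = (mdet m != 0).
Proof. by case: m => [[[a b] c] d]. Qed.
Lemma mdet_adj m : mdet (adjm m) = mdet m.
Proof. by case: m => [[[a b] c] d]; rewrite /=; ring. Qed.
Lemma appM_adj m Y : appM m (appM (adjm m) Y) = sv (mdet m) Y.
Proof. by case: m => [[[a b] c] d]; case: Y => y1 y2; rewrite /sv /=; congr pair; ring. Qed.
Lemma appM_adj' m Y : appM (adjm m) (appM m Y) = sv (mdet m) Y.
Proof. by case: m => [[[a b] c] d]; case: Y => y1 y2; rewrite /sv /=; congr pair; ring. Qed.
Lemma pdet_appM m X Y : pdet (appM m X) (appM m Y) = mdet m * pdet X Y.
Proof. by case: m => [[[a b] c] d]; case: X => x1 x2; case: Y => y1 y2; rewrite /pdet /=; ring. Qed.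
Lemma appM_sv m k X : appM m (sv k X) = sv k (appM m X).
Proof. by case: m => [[[a b] c] d]; case: X => x1 x2; rewrite /sv /=; congr pair; ring. Qed.

Lemma nzpt_sv k X : k != 0 -> nzpt X -> nzpt (sv k X).
Proof.
move=> hk; rewrite !nzptE /sv /= !mulf_eq0 (negbTE hk) /=; done.
Qed.

Lemma nzpt_appM m X : mdet m != 0 -> nzpt X -> nzpt (appM m X).
Proof.
move=> hm hX; apply/negP => /eqP h0.
have := nzpt_sv hm hX; rewrite -appM_adj' h0.
by case: m {h0 hm} => [[[a b] c] d]; rewrite /nzpt /= !mulr0 !addr0 eqxx.
Qed.

Definition psiA (a D e : algC) (q : pt) : pt := (a * q.1 * q.2 + D * q.2 ^+ 2, e * q.1 ^+ 2).

Lemma psiA_sv a D e k X : psiA a D e (sv k X) = sv (k^+2) (psiA a D e X).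
Proof. by case: X => x1 x2; rewrite /psiA /sv /=; congr pair; ring. Qed.

Lemma psiA_nz a D e X : D != 0 -> e != 0 -> nzpt X -> nzpt (psiA a D e X).
Proof.
move=> hD he; case: X => x1 x2; rewrite !nzptE /psiA /=.
have [->|h1] := eqVneq x1 0; last by rewrite mulf_eq0 expf_eq0 (negbTE he) (negbTE h1) orbT.
by move=> h2; apply/orP; left; rewrite mulr0 mul0r add0r mulf_neq0 // expf_neq0.
Qed.

Lemma psiA_pe a D e X Y : nzpt Y -> pdet X Y = 0 -> pdet (psiA a D e X) (psiA a D e Y) = 0.
Proof. by move=> hY /(pdet_ex hY) [k ->]; rewrite psiA_sv pdet_svl pdet_self mulr0. Qed.

Definition critA a D e y := forall z, nzpt z -> pdet (psiA a D e z) (psiA a D e y) = 0 -> pdet z y = 0.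

Definition autA a D e S := forall Q, nzpt Q -> pdet (appM S (psiA a D e Q)) (psiA a D e (appM S Q)) = 0.

Lemma eq0_trans (X Y : algC) : Y = 0 -> X = Y -> X = 0.
Proof. by move=> h ->. Qed.

Lemma mulf_eq0' (x y : algC) : x != 0 -> x * y = 0 -> y = 0.
Proof. by move=> hx /eqP; rewrite mulf_eq0 (negbTE hx) /= => /eqP. Qed.

Lemma crit_S a D e S y : D != 0 -> e != 0 -> mdet S != 0 -> autA a D e S ->
  nzpt y -> critA a D e y -> critA a D e (appM S y).
Proof.
move=> hD he hS haut hy hc z hz hzy.
set w := appM (adjm S) z.
have hw : appM S w = sv (mdet S) z by rewrite appM_adj.
have nw : nzpt w by apply: nzpt_appM; rewrite ?mdet_adj.
have h1 := haut w nw; rewrite hw psiA_sv pdet_svr in h1.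
have {}h1 := mulf_eq0' (expf_neq0 2 hS) h1.
have h3 := pdet_sym (haut y hy).
have h4 : pdet (appM S (psiA a D e w)) (appM S (psiA a D e y)) = 0.
  apply: (pdet_trans _ h1); first by apply: psiA_nz.
  apply: (pdet_trans _ hzy h3); apply: psiA_nz => //; exact: nzpt_appM.
rewrite pdet_appM in h4; have {}h4 := mulf_eq0' hS h4.
have h5 := hc w nw h4.
have : pdet (appM S w) (appM S y) = 0 by rewrite pdet_appM h5 mulr0.
by rewrite hw pdet_svl; apply: mulf_eq0'.
Qed.

Lemma crit_char a D e y : D != 0 -> critA a D e y -> nzpt y ->
  y.1 * (a * y.1 + 2 * D * y.2) = 0.
Proof.
case: y => y1 y2 /= hD hc hy.
set z : pt := (D * y1, - (a * y1 + D * y2)).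
have nz : nzpt z.
  move: hy; rewrite !nzptE /z /=.
  have [->|h1] := eqVneq y1 0; last by rewrite mulf_eq0 (negbTE hD) h1.
  by move=> /= h2; apply/orP; right; rewrite mulr0 add0r oppr_eq0 mulf_neq0.
have := hc z nz; rewrite /pdet /psiA /z /= => h.
have -> : y1 * (a * y1 + 2 * D * y2) = D * y1 * y2 - - (a * y1 + D * y2) * y1 by ring.
apply: h; ring.
Qed.

Lemma two_nz : (2 : algC) != 0.
Proof. by rewrite pnatr_eq0. Qed.

Lemma coreA a D e s1 s2 s3 s4 : D != 0 -> e != 0 ->
  mdet (s1, s2, s3, s4) != 0 -> autA a D e (s1, s2, s3, s4) ->
  ~ (s2 = 0 /\ s3 = 0 /\ s1 = s4) -> a = 0.
Proof.
set S := (s1, s2, s3, s4) => hD he hS haut hns.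
apply/eqP/negPn/negP => ha.
pose O : pt := (0, 1). pose I : pt := (1, 0). pose C : pt := (- (2 * D), a).
have nO : nzpt O by rewrite nzptE /= oner_eq0 orbT.
have nI : nzpt I by rewrite nzptE /= oner_eq0.
have nC : nzpt C by rewrite nzptE /= oppr_eq0 mulf_neq0 ?two_nz.
have critO : critA a D e O.
  move=> [z1 z2] _; rewrite /pdet /psiA /= => h.
  have : (- (e * D)) * z1 ^+ 2 = 0 by apply: (eq0_trans h); ring.
  move/(mulf_eq0' _); rewrite oppr_eq0 mulf_neq0 // => /(_ isT) /eqP.
  by rewrite expf_eq0 /= => /eqP ->; ring.
have critC : critA a D e C.
  move=> [z1 z2] _; rewrite /pdet /psiA /= => h.
  have : (e * D) * (a * z1 + 2 * D * z2) ^+ 2 = 0 by apply: (eq0_trans h); ring.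
  move/(mulf_eq0' _); rewrite mulf_neq0 // => /(_ isT) /eqP.
  by rewrite expf_eq0 /= => /eqP h2; rewrite -h2; ring.
have nSO : nzpt (appM S O) by apply: nzpt_appM.
have cSO := crit_S hD he hS haut nO critO.
have := crit_char hD cSO nSO.
have -> : appM S O = (s2, s4) by rewrite /S /=; congr pair; ring.
rewrite /= => hc.
have [s20|s2n] := eqVneq s2 0.
- have s4n : s4 != 0 by move: hS; rewrite /= s20 mul0r subr0 mulf_eq0 negb_or => /andP [].
  have h := haut O nO.
  have s30 : s3 = 0.
    move: h; rewrite /pdet /psiA /= s20 => h.
    have : (- (D ^+ 2 * s4 ^+ 2)) * s3 = 0 by apply: (eq0_trans h); ring.
    by move/(mulf_eq0' _); rewrite oppr_eq0 mulf_neq0 ?expf_neq0 // => /(_ isT).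
  have cSC := crit_S hD he hS haut nC critC.
  have nSC : nzpt (appM S C) by apply: nzpt_appM.
  have := crit_char hD cSC nSC.
  rewrite /= s20 s30 => h2.
  have s1n : s1 != 0 by move: hS; rewrite /= s20 mul0r subr0 mulf_eq0 negb_or => /andP [].
  have : (- (4 * a * D ^+ 2 * s1)) * (s4 - s1) = 0 by apply: (eq0_trans h2); ring.
  move/(mulf_eq0' _); rewrite oppr_eq0 !mulf_neq0 ?expf_neq0 ?pnatr_eq0 // => /(_ isT) /eqP.
  by rewrite subr_eq0 => /eqP h3; apply: hns.
- have hac : a * s2 + 2 * D * s4 = 0.
    by apply: (mulf_eq0' s2n); rewrite -hc.
  have hSOC : pdet (appM S O) C = 0.
    by apply: (eq0_trans hac); rewrite /pdet /=; ring.
  have hO := haut O nO.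
  rewrite (_ : psiA a D e O = sv D I) in hO; last first.
    by rewrite /psiA /sv /=; congr pair; ring.
  rewrite appM_sv pdet_svl in hO; have {}hO := mulf_eq0' hD hO.
  have h1 : pdet (appM S I) (psiA a D e C) = 0.
    apply: (pdet_trans _ hO); first by apply: psiA_nz.
    exact: psiA_pe.
  have hI := haut I nI.
  rewrite (_ : psiA a D e I = sv e O) in hI; last first.
    by rewrite /psiA /sv /=; congr pair; ring.
  rewrite appM_sv pdet_svl in hI; have {}hI := mulf_eq0' he hI.
  have nSI : nzpt (appM S I) by apply: nzpt_appM.
  have nPC : nzpt (psiA a D e C) by apply: psiA_nz.
  have h2 : pdet (psiA a D e (psiA a D e C)) C = 0.
    apply: (pdet_trans _ (pdet_sym (psiA_pe a D e nPC h1))); first by apply: psiA_nz.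
    by apply: (pdet_trans nSO (pdet_sym hI)).
  have h3 : a ^+ 3 = 8 * e * D ^+ 2.
    move: h2; rewrite /pdet /psiA /= => h2.
    have : (2 * e * D ^+ 3 * a) * (8 * e * D ^+ 2 - a ^+ 3) = 0 by apply: (eq0_trans h2); ring.
    move/(mulf_eq0' _); rewrite !mulf_neq0 ?expf_neq0 ?two_nz // => /(_ isT) /eqP.
    by rewrite subr_eq0 => /eqP.
  have h4 : pdet (psiA a D e C) C = 0.
    apply: (@eq0_trans _ (- D * (a ^+ 3 - 8 * e * D ^+ 2))); first by rewrite h3 subrr mulr0.
    by rewrite /pdet /psiA /=; ring.
  have h5 : pdet (appM S I) (appM S O) = 0.
    apply: (pdet_trans nPC h1); apply: (pdet_trans nC h4); exact: pdet_sym.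
  move: h5; rewrite pdet_appM.
  have -> : pdet I O = 1 by rewrite /pdet /=; ring.
  by rewrite mulr1 => /eqP; rewrite (negbTE hS).
Qed.

Definition mmul (m n : mob algC) : mob algC :=
  let: (a,b,c,d) := m in let: (a',b',c',d') := n in
  (a*a' + b*c', a*b' + b*d', c*a' + d*c', c*b' + d*d').

Lemma appM_mmul m n X : appM (mmul m n) X = appM m (appM n X).
Proof.
case: m => [[[a b] c] d]; case: n => [[[a' b'] c'] d']; case: X => x1 x2.
by rewrite /=; congr pair; ring.
Qed.

Lemma mdet_mmul u v : mdet (mmul u v) = mdet u * mdet v.
Proof. by case: u => [[[? ?] ?] ?]; case: v => [[[? ?] ?] ?]; rewrite /mdet /mmul /=; ring. Qed.

Lemma app2_sv (phi : hmap2) k X : app2 phi (sv k X) = sv (k ^+ 2) (app2 phi X).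
Proof.
case: phi => [[[f1 f2] f3] [[g1 g2] g3]]; case: X => x1 x2.
by rewrite /app2 /sv /feval /=; congr pair; ring.
Qed.

Lemma feval_lin (f : form2 algC) (x y q : pt) :
  feval f (x.1 * q.1 + y.1 * q.2, x.2 * q.1 + y.2 * q.2) =
  q.1 ^+ 2 * feval f x + q.1 * q.2 * (feval f (x.1 + y.1, x.2 + y.2) - feval f x - feval f y)
  + q.2 ^+ 2 * feval f y.
Proof. by case: f => [[f1 f2] f3]; rewrite /feval /=; ring. Qed.

Lemma sv_inv k X : k != 0 -> sv k^-1 (sv k X) = X.
Proof. by move=> hk; case: X => x1 x2; rewrite /sv /= !mulrA !mulVf ?mul1r. Qed.

Definition keyform (m : mob algC) (c e : algC) (X : pt) : pt :=
  let u := appM (adjm m) X in appM m (c * u.2 ^+ 2, e * u.1 ^+ 2).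

Lemma partA phi : deg2 phi -> (exists P, periodic2 phi P /\ critical phi P) ->
  nontrivial_aut phi ->
  exists m c e, [/\ mdet m != 0, c != 0, e != 0 & forall X, app2 phi X = keyform m c e X].
Proof.
move=> hdeg [[p1 p2] [[nzP [hper hnp]] [_ [cc hc]]]] [s [sok [[P0 [nzP0 ns]] hs]]].
case: phi hdeg hper hnp hc hs => f g hdeg hper hnp hc hs.
set P : pt := (p1, p2) in nzP hper hnp hc.
set R := app2 (f, g) P in hper hnp.
set m : mob algC := (R.1, p1, R.2, p2).
have hD : mdet m != 0.
  by move: hnp; rewrite peqE /pdet /m /=; apply: contra => /eqP h; apply/eqP; rewrite -h; ring.
set D := mdet m in hD.
pose psi Q := appM (adjm m) (app2 (f, g) (appM m Q)).
pose a := p2 * (feval f (R.1 + p1, R.2 + p2) - feval f R - feval f P)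
          - p1 * (feval g (R.1 + p1, R.2 + p2) - feval g R - feval g P).
pose e := - cc * D ^+ 2.
have hR0 : p2 * feval f R - p1 * feval g R = 0.
  move: hper; rewrite peqE /pdet /= => /eqP h; apply: (eq0_trans h); ring.
have psiE : forall Q, psi Q = psiA a D e Q.
  move=> [q1 q2]; rewrite /psi /psiA /=; congr pair.
  - rewrite (feval_lin f R P (q1, q2)) (feval_lin g R P (q1, q2)) /=.
    transitivity (q1 ^+ 2 * (p2 * feval f R - p1 * feval g R) +
                 (a * q1 * q2 + D * q2 ^+ 2)); last by rewrite hR0 mulr0 add0r.
    by rewrite /a /D /m /R /P /=; ring.
  - have := hc (R.1 * q1 + p1 * q2, R.2 * q1 + p2 * q2).
    rewrite /= => h.
    transitivity (- (feval f (R.1 * q1 + p1 * q2, R.2 * q1 + p2 * q2) * feval g P -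
       feval g (R.1 * q1 + p1 * q2, R.2 * q1 + p2 * q2) * feval f P)).
      by rewrite /R /P /=; ring.
    by rewrite h /e /D /m /R /P /=; ring.
have he : e != 0.
  have h1 : nzpt (psi (1, 0)).
    apply: nzpt_appM; first by rewrite mdet_adj.
    apply: hdeg; apply: nzpt_appM => //; rewrite nzptE /= oner_eq0 //.
  move: h1; rewrite psiE /psiA nzptE /=.
  have -> : a * 1 * 0 + D * 0 ^+ 2 = 0 by ring.
  by rewrite eqxx /= expr1n mulr1.
case hS: (mmul (adjm m) (mmul s m)) => [[[t1 t2] t3] t4].
have hSE : forall Q, appM (t1, t2, t3, t4) Q = appM (adjm m) (appM s (appM m Q)).
  by move=> Q; rewrite -hS !appM_mmul.
have hsdet : mdet s != 0 by rewrite -mob_okE.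
have hSd : mdet (t1, t2, t3, t4) != 0.
  have -> : mdet (t1, t2, t3, t4) = mdet (mmul (adjm m) (mmul s m)) by rewrite hS.
  by rewrite !mdet_mmul mdet_adj !mulf_neq0.
have haut : autA a D e (t1, t2, t3, t4).
  move=> Q nQ; rewrite -!psiE /psi !hSE appM_adj appM_adj app2_sv !appM_sv.
  rewrite pdet_svl pdet_svr pdet_appM.
  have nMQ : nzpt (appM m Q) by apply: nzpt_appM.
  by move: (hs _ nMQ); rewrite peqE => /eqP ->; rewrite !mulr0.
have hns : ~ (t2 = 0 /\ t3 = 0 /\ t1 = t4).
  move=> [h2 [h3 h4]].
  have := hSE (appM (adjm m) P0).
  rewrite appM_adj !appM_sv h2 h3 h4 => hh.
  have : pdet (sv D (appM (adjm m) (appM s P0))) (appM (adjm m) P0) = 0.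
    rewrite -hh /pdet /=; ring.
  rewrite pdet_svl pdet_appM mdet_adj => h5.
  move: ns; rewrite peqE => /eqP; apply.
  by apply: (mulf_eq0' hD); apply: (mulf_eq0' hD).
have a0 : a = 0 := coreA hD he hSd haut hns.
exists m, (D ^-1 ^+ 3 * D), (D ^-1 ^+ 3 * e); split.
- exact: hD.
- by rewrite mulf_neq0 ?expf_neq0 ?invr_eq0.
- by rewrite mulf_neq0 ?expf_neq0 ?invr_eq0.
move=> X.
have h1 : psi (appM (adjm m) X) = sv (D ^+ 2) (appM (adjm m) (app2 (f, g) X)).
  by rewrite /psi appM_adj app2_sv appM_sv.
have h2 : sv (D ^+ 3) (app2 (f, g) X) = appM m (psi (appM (adjm m) X)).
  by rewrite h1 appM_sv appM_adj /sv /D /m /R /=; congr pair; ring.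
rewrite -[LHS](@sv_inv (D ^+ 3)) ?expf_neq0 // h2 psiE a0 /keyform -appM_sv.
congr (appM m _); rewrite /sv /psiA /=; congr pair; rewrite exprVn; ring.
Qed.

Definition badf (m : mob algC) (c e : algC) (x : algC) : algC :=
  let u := appM (adjm m) (x, 1) in u.1 * u.2 * (e ^+ 2 * u.1 ^+ 6 - c ^+ 2 * u.2 ^+ 6).

Lemma choose_t (m : mob algC) c e : mdet m != 0 -> c != 0 -> e != 0 ->
  exists t : nat, badf m c e t%:R != 0.
Proof.
case: m => [[[m1 m2] m3] m4] hm hc he.
pose q1 : {poly algC} := m4%:P * 'X + (- m2)%:P.
pose q2 : {poly algC} := (- m3)%:P * 'X + m1%:P.
pose q3 : {poly algC} := e ^+ 2 *: q1 ^+ 6 - c ^+ 2 *: q2 ^+ 6.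
pose pp := q1 * q2 * q3.
have hq1 : forall x, q1.[x] = m4 * x - m2 by move=> x; rewrite /q1 !hornerE.
have hq2 : forall x, q2.[x] = - m3 * x + m1 by move=> x; rewrite /q2 !hornerE.
have hq3 : forall x, q3.[x] = e ^+ 2 * q1.[x] ^+ 6 - c ^+ 2 * q2.[x] ^+ 6.
  by move=> x; rewrite /q3 !hornerE.
have hpp : forall x, pp.[x] = badf (m1, m2, m3, m4) c e x.
  move=> x; rewrite /pp !hornerM hq3 hq1 hq2 /badf /=; ring.
have hm' : m1 * m4 - m2 * m3 != 0 by [].
have nz_of : forall (p : {poly algC}) x, p.[x] != 0 -> p != 0.
  by move=> p x; apply: contra => /eqP ->; rewrite horner0.
have n1 : q1 != 0.
  have [h4|h4] := eqVneq m4 0.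
  - have h2 : m2 != 0 by move: hm'; rewrite h4 mulr0 sub0r oppr_eq0 mulf_eq0 negb_or => /andP [].
    by apply: (nz_of _ 0); rewrite hq1 mulr0 sub0r oppr_eq0.
  - apply: (nz_of _ ((m2 + 1) / m4)); rewrite hq1 mulrC divfK // addrC addKr oner_eq0 //.
have n2 : q2 != 0.
  have [h3|h3] := eqVneq m3 0.
  - have h1 : m1 != 0 by move: hm'; rewrite h3 mulr0 subr0 mulf_eq0 negb_or => /andP [].
    by apply: (nz_of _ 0); rewrite hq2 mulr0 add0r.
  - apply: (nz_of _ ((m1 - 1) / m3)); rewrite hq2 mulNr mulrC divfK //.
    by rewrite (_ : - (m1 - 1) + m1 = 1) ?oner_eq0 //; ring.
have n3 : q3 != 0.
  have [h3|h3] := eqVneq m3 0.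
  - have h1 : m1 != 0 by move: hm'; rewrite h3 mulr0 subr0 mulf_eq0 negb_or => /andP [].
    have h4 : m4 != 0 by move: hm'; rewrite h3 mulr0 subr0 mulf_eq0 negb_or => /andP [].
    apply: (nz_of _ (m2 / m4)); rewrite hq3 hq1 hq2 h3.
    have -> : m4 * (m2 / m4) - m2 = 0 by field.
    have -> : - 0 * (m2 / m4) + m1 = m1 by ring.
    by rewrite expr0n /= mulr0 sub0r oppr_eq0 mulf_neq0 ?expf_neq0.
  - apply: (nz_of _ (m1 / m3)); rewrite hq3 hq1 hq2.
    have -> : - m3 * (m1 / m3) + m1 = 0 by field.
    have -> : m4 * (m1 / m3) - m2 = (m1 * m4 - m2 * m3) / m3 by field.
    by rewrite expr0n /= mulr0 subr0 mulf_neq0 ?expf_neq0 // mulf_neq0 ?invr_eq0.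
have npp : pp != 0 by rewrite !mulf_neq0.
have spp : (size pp <= 9)%N.
  have s1 : (size q1 <= 2)%N by rewrite /q1 size_MXaddC; case: ifP => // _; rewrite size_polyC; case: (_ != 0).
  have s2 : (size q2 <= 2)%N by rewrite /q2 size_MXaddC; case: ifP => // _; rewrite size_polyC; case: (_ != 0).
  have s1' : (size (e ^+ 2 *: q1 ^+ 6) <= 7)%N.
    apply: (leq_trans (size_scale_leq _ _)); apply: (leq_trans (size_poly_exp_leq _ _)).
    by case: (size q1) s1 => [|[|[|]]].
  have s2' : (size (c ^+ 2 *: q2 ^+ 6) <= 7)%N.
    apply: (leq_trans (size_scale_leq _ _)); apply: (leq_trans (size_poly_exp_leq _ _)).
    by case: (size q2) s2 => [|[|[|]]].
  have s3 : (size q3 <= 7)%N.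
    by apply: (leq_trans (size_polyD _ _)); rewrite size_polyN geq_max s1' s2'.
  apply: (leq_trans (size_polyMleq _ _)).
  have : (size (q1 * q2)%R <= 3)%N.
    apply: (leq_trans (size_polyMleq _ _)).
    by case: (size q1) s1 => [|[|[|]]] //; case: (size q2) s2 => [|[|[|]]].
  by case: (size (q1 * q2)%R) => [|[|[|[|]]]] //; case: (size q3) s3 => [|[|[|[|[|[|[|[|]]]]]]]].
pose rs := [seq (i%:R : algC) | i <- iota 0 9].
have urs : uniq rs.
  rewrite map_inj_uniq ?iota_uniq // => i j /eqP; rewrite eqr_nat => /eqP.
  done.
have [/hasP [t _ ht]|hn] := boolP (has (fun t : nat => badf (m1, m2, m3, m4) c e t%:R != 0) (iota 0 9)).
  by exists t.
exfalso.
have : all (root pp) rs.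
  apply/allP => x /mapP [i hi ->]; rewrite /root hpp.
  by apply/negPn; apply: contra hn => hb; apply/hasP; exists i.
move/(max_poly_roots npp)/(_ urs).
by rewrite size_map size_iota => /leq_trans /(_ spp).
Qed.

Definition fevalQ (f : form2 rat) (p : rat * rat) : rat :=
  let: (a, b, c) := f in a * p.1 ^+ 2 + b * p.1 * p.2 + c * p.2 ^+ 2.
Definition app2Q (F G : form2 rat) (p : rat * rat) : rat * rat := (fevalQ F p, fevalQ G p).
Definition rp (p : rat * rat) : pt := (ratr p.1, ratr p.2).
Definition pdetQ (p q : rat * rat) : rat := p.1 * q.2 - p.2 * q.1.

Lemma feval_rp f p : feval (fratr f) (rp p) = ratr (fevalQ f p).
Proof.
case: f => [[a b] c]; case: p => x y.
by rewrite /feval /fevalQ /fratr /rp /= !expr2 !rmorphD !rmorphM.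
Qed.

Lemma app2_rp F G p : app2 (hmapQ F G) (rp p) = rp (app2Q F G p).
Proof. by rewrite /app2 /hmapQ /rp /= !feval_rp. Qed.

Lemma pdet_rp p q : pdet (rp p) (rp q) = ratr (pdetQ p q).
Proof. by rewrite /pdet /pdetQ /rp /= rmorphB !rmorphM. Qed.

Definition psi0 (c e : algC) (u : pt) : pt := (c * u.2 ^+ 2, e * u.1 ^+ 2).

Lemma keyformE m c e X : keyform m c e X = appM m (psi0 c e (appM (adjm m) X)).
Proof. by []. Qed.

Lemma adj_key m c e X :
  appM (adjm m) (keyform m c e X) = sv (mdet m) (psi0 c e (appM (adjm m) X)).
Proof. by rewrite keyformE appM_adj'. Qed.

Lemma psi0_sv c e k u : psi0 c e (sv k u) = sv (k ^+ 2) (psi0 c e u).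
Proof. by case: u => u1 u2; rewrite /psi0 /sv /=; congr pair; ring. Qed.

Lemma pdet_adjL m X w : pdet X (appM m w) = pdet (appM (adjm m) X) w.
Proof. by case: m => [[[a b] c] d]; case: X => x1 x2; case: w => w1 w2; rewrite /pdet /=; ring. Qed.

Lemma neq0_of (x y z : algC) : x * y = z -> z != 0 -> x != 0.
Proof. by move=> <-; apply: contra => /eqP ->; rewrite mul0r. Qed.

Lemma Psi_struct (tau m : mob algC) c e (P : pt) (Psi : pt -> pt) :
  (forall Q, Psi Q = appM (adjm tau) (keyform m c e (appM tau Q))) ->
  Psi P = ((P.1 ^+ 2 * (Psi (1, 0)).1 - 2 * P.1 * P.2 * (Psi (0, 1)).2 + P.2 ^+ 2 * (Psi (0, 1)).1),
           (P.1 ^+ 2 * (Psi (1, 0)).2 - 2 * P.1 * P.2 * (Psi (1, 0)).1 + P.2 ^+ 2 * (Psi (0, 1)).2)).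
Proof.
move=> hP; rewrite !hP; clear hP Psi.
case: tau => [[[t1 t2] t3] t4]; case: m => [[[m1 m2] m3] m4]; case: P => p1 p2.
by rewrite /keyform /=; congr pair; ring.
Qed.

Lemma key2 m c e X : keyform m c e (keyform m c e X) =
  sv (mdet m ^+ 2) (appM m (psi0 c e (psi0 c e (appM (adjm m) X)))).
Proof. by rewrite {1}keyformE adj_key psi0_sv appM_sv. Qed.

Lemma psiv_app v P : app2 (hmapQ psiF (psiG v)) P =
  (2 * P.1 * P.2 - P.2 ^+ 2, ratr v * P.1 ^+ 2 - P.2 ^+ 2).
Proof.
rewrite /app2 /hmapQ /psiF /psiG /fratr /feval /= rmorph0 rmorphN rmorph1.
rewrite (_ : ratr 2 = 2) ?ratr_nat //; congr pair; ring.
Qed.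

Lemma ratr_neq0 (x : rat) : ratr x != 0 :> algC -> x != 0.
Proof. by rewrite fmorph_eq0. Qed.

Lemma partB F G m c e : mdet m != 0 -> c != 0 -> e != 0 ->
  (forall X, app2 (hmapQ F G) X = keyform m c e X) -> deg2 (hmapQ F G) ->
  exists v : rat, v != 0 /\ v != 4 /\ lin_conj_Q (hmapQ F G) (hmapQ psiF (psiG v)).
Proof.
move=> hm hc he key hdeg.
have [t ht] := choose_t hm hc he.
pose x0q : rat * rat := (t%:R, 1).
pose x1q := app2Q F G x0q. pose x2q := app2Q F G x1q.
pose d01q := pdetQ x0q x1q. pose d02q := pdetQ x0q x2q. pose d21q := pdetQ x2q x1q.
pose X0 := rp x0q.
have hX0 : X0 = (t%:R, 1) by rewrite /X0 /rp /= ratr_nat rmorph1.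
have hX1 : rp x1q = keyform m c e X0 by rewrite -key app2_rp.
have hX2 : rp x2q = keyform m c e (keyform m c e X0) by rewrite -hX1 -key app2_rp.
pose u := appM (adjm m) X0.
have hb : badf m c e t%:R = u.1 * u.2 * (e ^+ 2 * u.1 ^+ 6 - c ^+ 2 * u.2 ^+ 6)
  by rewrite /badf -hX0.
rewrite hb in ht.
have E01 : ratr d01q = e * u.1 ^+ 3 - c * u.2 ^+ 3.
  by rewrite -pdet_rp hX1 keyformE pdet_adjL -/u /pdet /psi0 /=; ring.
have E02 : ratr d02q = mdet m ^+ 2 * (c * e * u.1 * u.2 * (c * u.2 ^+ 3 - e * u.1 ^+ 3)).
  by rewrite -pdet_rp hX2 key2 pdet_svr pdet_adjL -/u /pdet /psi0 /=; ring.
have E21 : ratr d21q = mdet m ^+ 3 * (c * e * (e ^+ 2 * u.1 ^+ 6 - c ^+ 2 * u.2 ^+ 6)).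
  rewrite -pdet_rp hX2 hX1 key2 keyformE pdet_svl pdet_appM -/u /pdet /psi0 /=.
  rewrite -(mdet_adj m); ring.
have n01 : ratr d01q != 0 :> algC.
  apply: (@neq0_of _ (u.1 * u.2 * (e * u.1 ^+ 3 + c * u.2 ^+ 3)) _ _ ht).
  by rewrite E01; ring.
have n02 : ratr d02q != 0 :> algC.
  apply: (@neq0_of _ (e * u.1 ^+ 3 + c * u.2 ^+ 3) (- (mdet m ^+ 2 * c * e) * (u.1 * u.2 * (e ^+ 2 * u.1 ^+ 6 - c ^+ 2 * u.2 ^+ 6)))).
    by rewrite E02; ring.
  by rewrite mulf_neq0 // oppr_eq0 !mulf_neq0 ?expf_neq0.
have n21 : ratr d21q != 0 :> algC.
  apply: (@neq0_of _ (u.1 * u.2) (mdet m ^+ 3 * c * e * (u.1 * u.2 * (e ^+ 2 * u.1 ^+ 6 - c ^+ 2 * u.2 ^+ 6)))).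
    by rewrite E21; ring.
  by rewrite mulf_neq0 // !mulf_neq0 ?expf_neq0.
pose tauq : mob rat := (d21q * x0q.1, d02q * x1q.1, d21q * x0q.2, d02q * x1q.2).
pose T := mratr tauq.
pose d01 : algC := ratr d01q. pose d02 : algC := ratr d02q. pose d21 : algC := ratr d21q.
have {}n01 : d01 != 0 := n01.
have {}n02 : d02 != 0 := n02.
have {}n21 : d21 != 0 := n21.
have hT : T = (d21 * (rp x0q).1, d02 * (rp x1q).1, d21 * (rp x0q).2, d02 * (rp x1q).2).
  by rewrite /T /tauq /mratr /= !rmorphM.
have Ed01 : d01 = pdet (rp x0q) (rp x1q) by rewrite pdet_rp.
have Ed02 : d02 = pdet (rp x0q) (rp x2q) by rewrite pdet_rp.
have Ed21 : d21 = pdet (rp x2q) (rp x1q) by rewrite pdet_rp.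
have hTdet : mdet T = d21 * d02 * d01.
  by rewrite hT {1}Ed01 /pdet /=; ring.
have nT : mdet T != 0.
  by rewrite hTdet; apply: mulf_neq0 => //; apply: mulf_neq0.
pose Psi := fun Q => appM (adjm T) (keyform m c e (appM T Q)).
have P10 : Psi (1, 0) = (0, d21 ^+ 3 * d01).
  rewrite /Psi (_ : appM T (1, 0) = sv d21 X0); last first.
    by rewrite hT /sv /X0 /=; congr pair; ring.
  rewrite -key app2_sv key -hX1 appM_sv hT /sv Ed01 /pdet /=; congr pair; ring.
have P01 : Psi (0, 1) = (d02 ^+ 3 * d21, d02 ^+ 3 * d21).
  rewrite /Psi (_ : appM T (0, 1) = sv d02 (rp x1q)); last first.
    by rewrite hT /sv /=; congr pair; ring.
  rewrite -key app2_sv app2_rp -/x2q appM_sv hT /sv Ed02 Ed21 /pdet /=; congr pair; ring.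
pose vq := - (d21q ^+ 2 * d01q) / d02q ^+ 3.
have hv : ratr vq = - (d21 ^+ 2 * d01) / d02 ^+ 3.
  by rewrite /vq fmorph_div rmorphN rmorphM !rmorphXn.
have hPsi : forall P, Psi P = sv (- (d02 ^+ 3 * d21)) (app2 (hmapQ psiF (psiG vq)) P).
  move=> P; rewrite (@Psi_struct T m c e P Psi) // P10 P01 psiv_app hv /sv /=; congr pair; first by ring.
  by field.
have hfin : forall P, sv (mdet T) (app2 (hmapQ F G) (appM T P)) =
    sv (- (d02 ^+ 3 * d21)) (appM T (app2 (hmapQ psiF (psiG vq)) P)).
  by move=> P; rewrite -appM_sv -hPsi /Psi appM_adj key.
exists vq; split; last split.
- rewrite /vq mulf_neq0 ?invr_eq0 ?expf_neq0 ?oppr_eq0 ?mulf_neq0 ?expf_neq0 //.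
  - exact: ratr_neq0 n21.
  - exact: ratr_neq0 n21.
  - exact: ratr_neq0 n01.
  - exact: ratr_neq0 n02.
- apply/eqP => v4.
  have h := hfin (1, 2).
  rewrite psiv_app v4 /= (_ : ratr 4 = 4) ?ratr_nat // in h.
  have nz : nzpt (sv (mdet T) (app2 (hmapQ F G) (appM T (1, 2)))).
    apply: nzpt_sv => //; apply: hdeg; apply: nzpt_appM => //.
    by rewrite nzptE /= oner_eq0.
  move: nz; rewrite h.
  rewrite (_ : 2 * 1 * 2 - 2 ^+ 2 = 0 :> algC); last by ring.
  rewrite (_ : 4 * 1 ^+ 2 - 2 ^+ 2 = 0 :> algC); last by ring.
  by rewrite /sv nzptE /= !mulr0 !addr0 mulr0 eqxx.
- exists tauq; split; first by rewrite mob_okE.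
  move=> P _; rewrite peqE; apply/eqP.
  apply: (mulf_eq0' nT); rewrite -pdet_svl hfin pdet_svl pdet_self mulr0 //.
Qed.

Theorem lemma2p6 (F G : form2 rat) :
  deg2 (hmapQ F G) ->
  (exists P : pt, periodic2 (hmapQ F G) P /\ critical (hmapQ F G) P) ->
  nontrivial_aut (hmapQ F G) ->
  exists v : rat, v != 0 /\ v != 4 /\ lin_conj_Q (hmapQ F G) (hmapQ psiF (psiG v)).
Proof.
move=> hdeg hP haut.
have [m [c [e [hm hc he key]]]] := partA hdeg hP haut.
exact: partB hm hc he key hdeg.
Qed.
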